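(* In the roundabout exploration process described in the context, for every $t\in[N]$ there are no three distinct agents $a_i,a_j,a_l\in A(t)$ with $D_i(t)\cap D_j(t)\cap D_l(t)\neq\emptyset$.
   Context: Let $n\ge 2$ and $k$ be natural numbers, $T$ a tree on an $n$-element vertex set $V$, and $N=2(n-1)$. Fix a root $r$ and a DFS tour of $T$ starting and ending at $r$ that traverses each edge of $T$ exactly twice, giving a cyclic vertex sequence $(v_1,\dots,v_N,v_{N+1})$ with $v_{N+1}=v_1=r$, and tour edges $e_i=\{v_i,v_{i+1}\}$ for $i\in[N]$. For $i,j\in[N]$ the circular interval $[\![i,j]\!]$ is $\{i,i+1,\dots,j\}$ if $i\le j$ and $\{i,\dots,N,1,\dots,j\}$ if $i>j$. Let $\langle G_1,\dots,G_N\rangle$ be graphs on $V$, each containing all but at most $k$ edges of $T$. Roundabout exploration process: agents $a_1,\dots,a_N$ with initial states $s_i(0)=i$. For steps $t=1,\dots,N$: (Movement) for every $i\in[N]$, if $s_i(t-1)=q$ then $s_i(t)=(q\bmod N)+1$ if $e_q\in E(G_t)$, and $s_i(t)=q$ otherwise. Let $D_i(t)=[\![i,s_i(t)]\!]$ and $D_i(0)=\{i\}$. (Elimination) $A(0)=\{a_1,\dots,a_N\}$; $A(t)$ is obtained from $A(t-1)$ by repeatedly removing an arbitrary agent $a_i$ of the current set with $D_i(t)\subseteq\bigcup D_j(t)$ over the other agents $a_j$ of the current set, until no such agent remains. *)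

(* Defs.v *)
From mathcomp Require Import all_boot.
Set Implicit Arguments. Unset Strict Implicit. Unset Printing Implicit Defensive.

Definition simple_graph (V : finType) (g : rel V) : Prop :=
  symmetric g /\ irreflexive g.

Definition edges (V : finType) (g : rel V) : {set {set V}} :=
  [set e : {set V} | [exists x : V, exists y : V, g x y && (e == [set x; y])]].

Definition acyclic (V : finType) (g : rel V) : Prop :=
  forall c : seq V, uniq c -> 3 <= size c -> ~~ cycle g c.

Definition is_tree (V : finType) (T : rel V) : Prop :=
  simple_graph T /\ (forall x y, connect T x y) /\ acyclic T.

Definition tour_edge (V : finType) (v : nat -> V) (q : nat) : {set V} :=
  [set v q; v q.+1].

Definition dfs_tour (V : finType) (T : rel V) (r : V) (N : nat)
    (v : nat -> V) : Prop :=
  [/\ v 1 = r, v N.+1 = r,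
      (forall q, 1 <= q <= N -> T (v q) (v q.+1)) &
      (forall e, e \in edges T ->
         count (fun q => tour_edge v q == e) (iota 1 N) = 2)].

Fixpoint pos (V : finType) (N : nat) (v : nat -> V) (G : nat -> rel V)
    (i t : nat) : nat :=
  match t with
  | 0 => i
  | t'.+1 =>
      let q := pos N v G i t' in
      if tour_edge v q \in edges (G t) then (q %% N).+1 else q
  end.

Definition cint (N i j : nat) : pred nat :=
  if i <= j then [pred q | i <= q <= j]
  else [pred q | (i <= q <= N) || (1 <= q <= j)].

Definition Dset (V : finType) (N : nat) (v : nat -> V) (G : nat -> rel V)
    (i t : nat) : pred nat :=
  cint N i (pos N v G i t).

(* Agents a_1..a_N are indexed by the elements 1..N of 'I_N.+1
   (index 0 is unused). *)
Definition agents0 (N : nat) : {set 'I_N.+1} := [set i : 'I_N.+1 | 0 < i].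

Definition removable (V : finType) (N : nat) (v : nat -> V) (G : nat -> rel V)
    (t : nat) (S : {set 'I_N.+1}) (i : 'I_N.+1) : Prop :=
  i \in S /\
  (forall q, q \in Dset N v G i t ->
     exists2 j : 'I_N.+1, j \in S :\ i & q \in Dset N v G j t).

Inductive elim_run (V : finType) (N : nat) (v : nat -> V) (G : nat -> rel V)
    (t : nat) : {set 'I_N.+1} -> {set 'I_N.+1} -> Prop :=
  | elim_done (S : {set 'I_N.+1}) :
      (forall i, ~ @removable V N v G t S i) -> @elim_run V N v G t S S
  | elim_step (S S' : {set 'I_N.+1}) (i : 'I_N.+1) :
      @removable V N v G t S i -> @elim_run V N v G t (S :\ i) S' ->
      @elim_run V N v G t S S'.

(* Main.v *)
Require Import Defs.
From mathcomp Require Import all_boot.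
From mathcomp Require Import zify.
From Stdlib Require Import Classical.
Set Implicit Arguments. Unset Strict Implicit.

Definition Cp (N i j q : nat) : Prop :=
  (i <= j /\ i <= q <= j) \/ (j < i /\ (i <= q <= N \/ 1 <= q <= j)).
Definition Mp (N a b x : nat) : Prop := x <= b \/ N - a <= x.
Definition dist (N x y : nat) := if x <= y then y - x else y + N - x.

Lemma arith N a1 b1 a2 b2 a3 b3 x1 x2 x3 :
  a1 + b1 < N -> a2 + b2 < N -> a3 + b3 < N ->
  x1 < N -> x2 < N -> x3 < N ->
  Mp N a1 b1 x1 -> ~ Mp N a2 b2 x1 -> ~ Mp N a3 b3 x1 ->
  Mp N a2 b2 x2 -> ~ Mp N a1 b1 x2 -> ~ Mp N a3 b3 x2 ->
  Mp N a3 b3 x3 -> ~ Mp N a2 b2 x3 -> ~ Mp N a1 b1 x3 -> False.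
Proof. rewrite /Mp. lia. Qed.

Lemma arc N i j q : 1 <= i <= N -> 1 <= j <= N -> 1 <= q <= N -> Cp N i j q ->
  dist N i q + dist N q j < N /\
  forall p, 1 <= p <= N -> (Cp N i j p <-> Mp N (dist N i q) (dist N q j) (dist N q p)).
Proof.
rewrite /Cp /Mp /dist => *.
case: (leqP i q) => ?; case: (leqP q j) => ?; split; try lia;
move=> p Hp; case: (leqP q p) => ?; lia.
Qed.

Lemma distlt N q p : 1 <= q <= N -> 1 <= p <= N -> dist N q p < N.
Proof. rewrite /dist => *; case: (leqP q p) => ?; lia. Qed.

Lemma cintP N i j q : q \in cint N i j <-> Cp N i j q.
Proof.
rewrite /cint /Cp; case: leqP => h; rewrite inE /=; split; lia.
Qed.

Lemma cint_range N i j q : 1 <= i -> j <= N -> q \in cint N i j -> 1 <= q <= N.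
Proof. move=> h1 h2 /cintP; rewrite /Cp; lia. Qed.

Lemma pos_range (V : finType) N (v : nat -> V) G i t :
  0 < N -> 1 <= i <= N -> 1 <= pos N v G i t <= N.
Proof.
move=> HN Hi; elim: t => [|t IH] //=.
case: ifP => _ //.
have := ltn_pmod (pos N v G i t) HN; lia.
Qed.

Lemma elim_final (V : finType) N (v : nat -> V) G t S S' :
  @elim_run V N v G t S S' -> forall i, ~ removable v G t S' i.
Proof. by elim. Qed.

Lemma elim_sub (V : finType) N (v : nat -> V) G t S S' :
  @elim_run V N v G t S S' -> S' \subset S.
Proof.
elim => // S1 S2 i _ _ H; apply: subset_trans H _; exact: subsetDl.
Qed.

Unset Implicit Arguments.

Theorem lemma6 (V : finType) (n k : nat) (T : rel V) (r : V)
    (v : nat -> V) (G : nat -> rel V) (A : nat -> {set 'I_(2 * (n - 1)).+1}) :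
  #|V| = n -> 2 <= n ->
  is_tree T ->
  dfs_tour T r (2 * (n - 1)) v ->
  (forall t, 1 <= t <= 2 * (n - 1) ->
     simple_graph (G t) /\ #|edges T :\: edges (G t)| <= k) ->
  A 0 = agents0 (2 * (n - 1)) ->
  (forall t, 1 <= t <= 2 * (n - 1) ->
     @elim_run V (2 * (n - 1)) v G t (A t.-1) (A t)) ->
  forall t, 1 <= t <= 2 * (n - 1) ->
  forall i j l : 'I_(2 * (n - 1)).+1,
    i \in A t -> j \in A t -> l \in A t ->
    i != j -> j != l -> i != l ->
    ~ (exists q, [/\ q \in Dset (2 * (n - 1)) v G i t,
                     q \in Dset (2 * (n - 1)) v G j t &
                     q \in Dset (2 * (n - 1)) v G l t]).
Proof.
set N := 2 * (n - 1).
move=> _ Hn _ _ _ HA0 Hrun t Ht i j l Hi Hj Hl Hij Hjl Hil [q [Qi Qj Ql]].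
have HN : 0 < N by rewrite /N; lia.
have Hsub : forall t', t' <= N -> A t' \subset agents0 N.
  elim=> [|t' IH] Ht'; first by rewrite HA0.
  apply: subset_trans (IH (ltnW Ht')).
  have H1 : 1 <= t'.+1 <= N by lia.
  exact: (@elim_sub _ _ _ _ _ _ _ (Hrun t'.+1 H1)).
have rng : forall a : 'I_N.+1, a \in A t -> 1 <= a <= N.
  move=> a Ha; have := subsetP (Hsub t (proj2 (andP Ht))) a Ha.
  rewrite inE => ->; have := ltn_ord a; lia.
have Hfin := @elim_final _ _ _ _ _ _ _ (Hrun t Ht).
have priv : forall a b c : 'I_N.+1, a \in A t -> b \in A t -> c \in A t ->
    a != b -> a != c ->
    exists p, [/\ p \in Dset N v G a t, p \notin Dset N v G b t &
                  p \notin Dset N v G c t].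
  move=> a b c Ha Hb Hc Hab Hac.
  apply: NNPP => Hno; apply: (Hfin a); split => // p Hp.
  case: (boolP (p \in Dset N v G b t)) => Pb.
    by exists b => //; rewrite !inE eq_sym Hab.
  case: (boolP (p \in Dset N v G c t)) => Pc.
    by exists c => //; rewrite !inE eq_sym Hac.
  by exfalso; apply: Hno; exists p.
have [p1 [P1i P1j P1l]] := priv i j l Hi Hj Hl Hij Hil.
have Hji : j != i by rewrite eq_sym.
have Hli : l != i by rewrite eq_sym.
have Hlj : l != j by rewrite eq_sym.
have [p2 [P2j P2i P2l]] := priv j i l Hj Hi Hl Hji Hjl.
have [p3 [P3l P3i P3j]] := priv l i j Hl Hi Hj Hli Hlj.
move: Qi Qj Ql P1i P1j P1l P2i P2j P2l P3i P3j P3l; rewrite /Dset => Qi Qj Ql P1i P1j P1l P2i P2j P2l P3i P3j P3l.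
have ri := rng i Hi; have rj := rng j Hj; have rl := rng l Hl.
have rsi := pos_range v G t HN ri.
have rsj := pos_range v G t HN rj.
have rsl := pos_range v G t HN rl.
have rq : 1 <= q <= N by apply: (cint_range _ _ Qi); [exact: (proj1 (andP ri)) | exact: (proj2 (andP rsi))].
have rp1 : 1 <= p1 <= N by apply: (cint_range _ _ P1i); [exact: (proj1 (andP ri)) | exact: (proj2 (andP rsi))].
have rp2 : 1 <= p2 <= N by apply: (cint_range _ _ P2j); [exact: (proj1 (andP rj)) | exact: (proj2 (andP rsj))].
have rp3 : 1 <= p3 <= N by apply: (cint_range _ _ P3l); [exact: (proj1 (andP rl)) | exact: (proj2 (andP rsl))].
have [Li Ei] := arc ri rsi rq ((cintP _ _ _ _).1 Qi).
have [Lj Ej] := arc rj rsj rq ((cintP _ _ _ _).1 Qj).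
have [Ll El] := arc rl rsl rq ((cintP _ _ _ _).1 Ql).
have M1 : forall (a b : nat) p, (p \in cint N a b) = false -> ~ Cp N a b p.
  by move=> a b p H /cintP; rewrite H.
apply: (arith Li Lj Ll (distlt rq rp1) (distlt rq rp2) (distlt rq rp3)).
- by apply/(Ei _ rp1)/cintP.
- by move/(Ej _ rp1)/cintP; apply/negP.
- by move/(El _ rp1)/cintP; apply/negP.
- by apply/(Ej _ rp2)/cintP.
- by move/(Ei _ rp2)/cintP; apply/negP.
- by move/(El _ rp2)/cintP; apply/negP.
- by apply/(El _ rp3)/cintP.
- by move/(Ej _ rp3)/cintP; apply/negP.
- by move/(Ei _ rp3)/cintP; apply/negP.
Qed.
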